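(* $$\lim_{n\to\infty}\frac{|CK_n|}{|K_n|}=1.$$
   Context: $K_n=\{\sigma\in S_n: |\sigma_i-\sigma_{i+1}|>1 \text{ for all } 1\le i\le n-1\}$ (king permutations, in one-line notation), and $CK_n=\{\sigma\in K_n: |\sigma_1-\sigma_n|>1\}$ (cylindrical king permutations). *)

(* Defs.v *)
From mathcomp Require Import all_boot all_fingroup.
Set Implicit Arguments. Unset Strict Implicit. Unset Printing Implicit Defensive.

(* Distance of naturals: |a - b| > 1, written without truncated subtraction pitfalls. *)
Definition far (a b : nat) : bool := (a.+1 < b) || (b.+1 < a).

(* A permutation s of {0..n-1} (one-line notation s(0) ... s(n-1), shifted by -1
   relative to the paper's 1-based convention; differences are unaffected). *)
Definition is_king (n : nat) (s : {perm 'I_n}) : bool :=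
  [forall i : 'I_n, forall j : 'I_n, (j == i.+1 :> nat) ==> far (s i) (s j)].

Definition is_cyl_king (n : nat) (s : {perm 'I_n}) : bool :=
  is_king s &&
  [forall i : 'I_n, forall j : 'I_n,
     ((i == 0 :> nat) && (j == n.-1 :> nat)) ==> far (s i) (s j)].

Definition K (n : nat) : {set {perm 'I_n}} := [set s | is_king s].
Definition CK (n : nat) : {set {perm 'I_n}} := [set s | is_cyl_king s].

(* Main.v *)
Require Import Defs.
From mathcomp Require Import all_boot all_fingroup.
From Stdlib Require Import Reals.
From Coquelicot Require Import Coquelicot.
From mathcomp Require Import zify.
From Stdlib Require Import Lra.
Set Implicit Arguments. Unset Strict Implicit. Unset Printing Implicit Defensive.
Local Open Scope nat_scope.
Lemma farC a b : far a b = far b a.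
Proof. by rewrite /far orbC. Qed.

Lemma count_eq1 (g : nat -> nat) n a :
  (forall i j, i < n -> j < n -> g i = g j -> i = j) ->
  \sum_(0 <= i < n) (g i == a) <= 1.
Proof.
elim: n => [|n IH] ginj; first by rewrite big_nil.
rewrite big_nat_recr //=.
have IH'' : forall i j, i < n -> j < n -> g i = g j -> i = j.
  by move=> i j hi hj; apply: ginj; lia.
case: eqP => [ha|_]; last by rewrite addn0; apply: IH.
suff -> : \sum_(0 <= i < n) (g i == a) = 0 by [].
apply/eqP; rewrite sum_nat_seq_eq0; apply/allP => i; rewrite mem_iota => /andP[_ hi] /=.
apply/eqP; case: eqP => // hg; exfalso.
have := ginj i n ltac:(lia) ltac:(lia) ltac:(by rewrite hg ha); lia.
Qed.

Lemma count_far (g : nat -> nat) n c :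
  (forall i j, i < n -> j < n -> g i = g j -> i = j) ->
  \sum_(0 <= i < n) (~~ far (g i) c) <= 3.
Proof.
move=> ginj.
apply: (@leq_trans (\sum_(0 <= i < n) ((g i == c) + (g i == c.+1) + (g i == c.-1)))).
  apply: leq_sum => i _; rewrite /far.
  case: (g i == c) /eqP; case: (g i == c.+1) /eqP; case: (g i == c.-1) /eqP => /=; lia.
rewrite !big_split /=.
have := @count_eq1 g n c ginj; have := @count_eq1 g n c.+1 ginj; have := @count_eq1 g n c.-1 ginj; lia.
Qed.

Definition gv n (s : {perm 'I_n}) (i : nat) : nat :=
  if insub i is Some x then val (s x) else 0.

Lemma gvE n (s : {perm 'I_n}) (x : 'I_n) : gv s x = s x.
Proof. by rewrite /gv valK. Qed.

Lemma gv_out n (s : {perm 'I_n}) i : n <= i -> gv s i = 0.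
Proof. by move=> h; rewrite /gv insubF // ltnNge h. Qed.

Lemma gv_inj n (s : {perm 'I_n}) i j : i < n -> j < n -> gv s i = gv s j -> i = j.
Proof.
move=> hi hj; have -> : i = Ordinal hi by []; have -> : j = Ordinal hj by [].
rewrite !gvE => /val_inj /perm_inj -> //.
Qed.

Lemma kingP n (s : {perm 'I_n}) :
  reflect (forall i, i.+1 < n -> far (gv s i) (gv s i.+1)) (s \in K n).
Proof.
rewrite inE; apply: (iffP forallP) => h.
  move=> i hi; have := forallP (h (Ordinal (ltnW hi))) (Ordinal hi).
  by rewrite eqxx /= -!gvE.
move=> i; apply/forallP => j; apply/implyP => /eqP hj.
by rewrite -!gvE hj; apply: h; rewrite -hj.
Qed.

Lemma ncyl m (s : {perm 'I_m.+1}) : s \in K m.+1 -> s \notin CK m.+1 ->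
  ~~ far (gv s 0) (gv s m).
Proof.
rewrite !inE /is_cyl_king => -> /= /forallPn [i /forallPn [j]].
rewrite negb_imply => /andP [/andP [/eqP hi /eqP hj]] hf.
by move: hf; rewrite -!gvE hi hj.
Qed.

Lemma gv_tperm n (s : {perm 'I_n}) (x y : 'I_n) i :
  gv (tperm x y * s)%g i = gv s (if i == val x then val y else if i == val y then val x else i).
Proof.
case: (ltnP i n) => hi.
  have -> : i = Ordinal hi by [].
  rewrite gvE permM.
  case: tpermP => [<-|<-|hx hy].
  - by rewrite eqxx gvE.
  - case: eqP => [h|_]; last by rewrite eqxx gvE.
    by rewrite gvE; congr (val (s _)); apply: val_inj.
  - have -> : (Ordinal hi == val x :> nat) = false.
      by apply/negbTE/eqP => e; apply: hx; apply: val_inj.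
    have -> : (Ordinal hi == val y :> nat) = false.
      by apply/negbTE/eqP => e; apply: hy; apply: val_inj.
    by rewrite gvE.
have -> : (i == val x) = false by apply/negbTE; apply/eqP => e; move: (ltn_ord x); rewrite -e; lia.
have -> : (i == val y) = false by apply/negbTE; apply/eqP => e; move: (ltn_ord y); rewrite -e; lia.
by rewrite !gv_out.
Qed.
Definition valid m (s : {perm 'I_m.+1}) (j : nat) : bool :=
  [&& 2 <= j, j.+2 <= m.+1, far (gv s j) (gv s 1), far (gv s 0) (gv s j.-1)
    & far (gv s 0) (gv s j.+1)].

Lemma swap_king m (s : {perm 'I_m.+1}) (j : 'I_m.+1) :
  s \in K m.+1 -> valid s j -> (tperm ord0 j * s)%g \in K m.+1.
Proof.
move/kingP => hK /and5P [h2 hj f1 f2 f3].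
apply/kingP => i hi; rewrite !gv_tperm /=.
case: (i =P 0) => [->|/eqP i0].
  by have -> : (1 == j) = false by apply/eqP; lia.
case: (i =P j) => [->|/eqP ij].
  by have -> : (j.+1 == j) = false by apply/eqP; lia.
case: (i.+1 =P j) => [e|_].
  by move: f2; rewrite -e /= farC.
by apply: hK.
Qed.

Lemma shiftP (h : nat -> bool) n :
  \sum_(0 <= j < n) h j.-1 <= 1 + \sum_(0 <= j < n) h j.
Proof.
case: n => [|n]; first by rewrite big_nil.
rewrite big_nat_recl //= (big_nat_recr n) //=.
have : h 0 <= 1 by case: (h 0).
have : \sum_(0 <= i < n) h i.+1.-1 = \sum_(0 <= i < n) h i by [].
lia.
Qed.

Lemma shiftS (h : nat -> bool) n :
  \sum_(0 <= j < n) h j.+1 <= 1 + \sum_(0 <= j < n) h j.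
Proof.
have := @big_nat_recl nat 0 addn n 0 (fun i => nat_of_bool (h i)) (leq0n n).
rewrite (big_nat_recr n) //=.
have : h n <= 1 by case: (h n).
lia.
Qed.

Lemma valid_count m (s : {perm 'I_m.+1}) :
  m.+1 <= \sum_(0 <= j < m.+1) valid s j + 17.
Proof.
have ginj := @gv_inj m.+1 s.
have idinj : forall i j, i < m.+1 -> j < m.+1 -> (fun x : nat => x) i = (fun x : nat => x) j -> i = j by [].
have e : \sum_(0 <= j < m.+1) valid s j + \sum_(0 <= j < m.+1) ~~ valid s j = m.+1.
  rewrite -big_split /=; transitivity (\sum_(0 <= j < m.+1) 1).
    by apply: eq_bigr => i _; case: (valid s i).
  by rewrite sum_nat_const_nat subn0 muln1.
suff : \sum_(0 <= j < m.+1) ~~ valid s j <= 17 by lia.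
apply: (@leq_trans (\sum_(0 <= j < m.+1) ((~~ far j 1) + (~~ far j m)
   + (~~ far (gv s j) (gv s 1)) + (~~ far (gv s j.-1) (gv s 0))
   + (~~ far (gv s j.+1) (gv s 0))))).
  rewrite big_nat_cond [X in _ <= X]big_nat_cond.
  apply: leq_sum => j /andP[/andP[_ hjm] _]; rewrite /valid (farC (gv s 0)) (farC (gv s 0)).
  case: (far (gv s j) (gv s 1)); case: (far (gv s j.-1) (gv s 0));
  case: (far (gv s j.+1) (gv s 0)); rewrite /= ?andbF ?addn1 ?addn0 //.
  rewrite /far; case: (leqP 2 j); case: (leqP j.+2 m.+1) => //=; lia.
rewrite !big_split /=.
have := count_far 1 idinj; have := count_far m idinj.
have := count_far (gv s 1) ginj; have := count_far (gv s 0) ginj.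
have := shiftP (fun j => ~~ far (gv s j) (gv s 0)) m.+1.
have := shiftS (fun j => ~~ far (gv s j) (gv s 0)) m.+1.
simpl; lia.
Qed.

Definition Bset n := K n :\: CK n.

Lemma fiber m (j : 'I_m.+1) :
  \sum_(s in Bset m.+1) valid s j <=
  \sum_(t in K m.+1) ~~ far (gv t j) (gv t m).
Proof.
rewrite (reindex_inj (mulgI (tperm ord0 j))) /=.
rewrite big_mkcond [X in _ <= X]big_mkcond /=.
apply: leq_sum => t _.
case hB: (_ \in Bset _) => //; case hv: (valid _ _) => //.
rewrite /Bset in_setD in hB; case/andP: hB => hC hK.
have ht : t = (tperm ord0 j * (tperm ord0 j * t))%g by rewrite mulgA tperm2 mul1g.
have hK' := swap_king hK hv; rewrite -ht in hK'.
rewrite hK'.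
move: hv => /and5P [h2 hj _ _ _].
have := ncyl hK hC.
rewrite !gv_tperm /=.
have -> : (m == 0) = false by apply/eqP; lia.
have -> : (m == j) = false by apply/eqP; lia.
by case: (far _ _).
Qed.

Lemma main_bound m : #|Bset m.+1| * (m.+1 - 17) <= #|K m.+1| * 3.
Proof.
apply: (@leq_trans (\sum_(s in Bset m.+1) \sum_(j < m.+1) valid s j)).
  rewrite -sum_nat_const; apply: leq_sum => s _.
  rewrite -(big_mkord xpredT (fun j => nat_of_bool (valid s j))).
  have := valid_count s; lia.
rewrite exchange_big /=.
apply: (@leq_trans (\sum_(j < m.+1) \sum_(t in K m.+1) ~~ far (gv t j) (gv t m))).
  by apply: leq_sum => j _; apply: fiber.
rewrite exchange_big /= -sum_nat_const; apply: leq_sum => t _.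
rewrite -(big_mkord xpredT (fun j => nat_of_bool (~~ far (gv t j) (gv t m)))).
exact: count_far (@gv_inj m.+1 t).
Qed.

Definition Fk n i := if i < n %/ 2 then 2 * i + 1 else 2 * (i - n %/ 2).

Lemma Fk_lt n i : i < n -> Fk n i < n.
Proof.
rewrite /Fk; have := divn_eq n 2; have := ltn_pmod n (isT : 0 < 2).
move: (n %/ 2) (n %% 2) => h r; case: ifP; lia.
Qed.

Definition kf m (i : 'I_m.+1) : 'I_m.+1 := inord (Fk m.+1 i).

Lemma kf_inj m : injective (@kf m).
Proof.
move=> x y; rewrite /kf => /(congr1 (@nat_of_ord _)); rewrite !inordK ?Fk_lt // => h; apply: ord_inj.
move: h (ltn_ord x) (ltn_ord y); rewrite /Fk.
have := divn_eq m.+1 2; have := ltn_pmod m.+1 (isT : 0 < 2).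
move: (m.+1 %/ 2) (m.+1 %% 2) => h r; case: ifP; case: ifP; lia.
Qed.

Lemma K_pos m : 3 <= m -> 0 < #|K m.+1|.
Proof.
move=> hm; apply/card_gt0P; exists (perm (@kf_inj m)).
rewrite inE; apply/forallP => i; apply/forallP => j; apply/implyP => /eqP hj.
rewrite !permE /kf !inordK ?Fk_lt // hj.
move: (ltn_ord j); rewrite hj /far /Fk => hi.
have := divn_eq m.+1 2; have := ltn_pmod m.+1 (isT : 0 < 2).
move: (m.+1 %/ 2) (m.+1 %% 2) => h r; case: ifP; case: ifP; lia.
Qed.

Lemma nat_facts n : 34 <= n ->
  [&& 0 < #|K n|, #|CK n| <= #|K n| & (#|K n| - #|CK n|) * n <= 6 * #|K n|].
Proof.
case: n => [|m] // hm.
have sub : CK m.+1 \subset K m.+1.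
  by apply/subsetP => s; rewrite !inE => /andP [].
have hB : #|Bset m.+1| = #|K m.+1| - #|CK m.+1|.
  by rewrite /Bset cardsD (setIidPr sub).
have := main_bound m; rewrite hB => hb.
rewrite K_pos; last by lia.
rewrite subset_leq_card //=.
have : (#|K m.+1| - #|CK m.+1|) * m.+1 <= 2 * ((#|K m.+1| - #|CK m.+1|) * (m.+1 - 17)).
  rewrite mulnCA leq_mul2l; apply/orP; right; lia.
move=> h; apply: (leq_trans h).
have -> : 6 * #|K m.+1| = 2 * (#|K m.+1| * 3) by lia.
by rewrite leq_mul2l hb orbT.
Qed.

Local Open Scope R_scope.

Lemma real_bound (C K N : R) : 0 < K -> 0 < N -> C <= K -> (K - C) * N <= 6 * K ->
  1 - 6 / N <= C / K <= 1.
Proof.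
move=> hK hN hCK h; split.
  have e : C / K - (1 - 6 / N) = (C * N - K * N + 6 * K) / (K * N) by field; lra.
  cut (0 <= C / K - (1 - 6 / N)); first lra.
  rewrite e; apply: Rdiv_le_0_compat; first lra.
  exact: Rmult_lt_0_compat.
have e : 1 - C / K = (K - C) / K by field; lra.
cut (0 <= 1 - C / K); first lra.
rewrite e; apply: Rdiv_le_0_compat; lra.
Qed.

Lemma lim_aux : is_lim_seq (fun n => 1 - 6 / INR n) 1.
Proof.
have h1 : is_lim_seq (fun n => / INR n) 0.
  exact: (is_lim_seq_inv INR p_infty is_lim_seq_INR ltac:(discriminate)).
have h2 : is_lim_seq (fun n => 6 * / INR n) 0.
  have := is_lim_seq_scal_l _ 6 _ h1; simpl; by rewrite Rmult_0_r.
have := is_lim_seq_minus' _ _ 1 0 (is_lim_seq_const 1) h2.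
rewrite Rminus_0_r; apply: is_lim_seq_ext => n; by [].
Qed.

Theorem theorem3p2 :
  is_lim_seq (fun n : nat => (INR #|CK n| / INR #|K n|)%R) 1%R.
Proof.
apply: (is_lim_seq_le_le_loc _ _ (fun _ => 1) _ _ lim_aux (is_lim_seq_const 1)).
exists 34%nat => n /leP hn.
have /and3P [hK hCK hb] := nat_facts hn.
apply: real_bound.
- by apply: lt_0_INR; apply/ltP.
- by apply: lt_0_INR; apply/ltP; apply: leq_trans hn.
- by apply: le_INR; apply/leP.
- rewrite -minus_INR; last by apply/leP.
  rewrite -mult_INR.
  have -> : 6 = INR 6 by simpl; ring.
  rewrite -mult_INR; apply: le_INR; apply/leP; exact: hb.
Qed.
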